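(* Let $K$ be a field and let $f\colon\mathbb Z^k\to K$ be a hypergeometric term on $\mathbb Z^k$. Then either $f$ is a zero divisor, or $f$ is nonzero on arbitrarily large $k$-dimensional boxes, i.e. for every $n\ge0$ there is a $k$-dimensional box of size $n$ at every point of which $f$ is nonzero.
   Context: A hypergeometric term on $\mathbb Z^k$ over $K$ is a function $f\colon\mathbb Z^k\to K$ such that for each $i\in\{1,\dots,k\}$ there are nonzero polynomials $A_i,B_i\in K[\vec z]$ with $A_i(\vec z)f(\vec z)=B_i(\vec z)f(\vec z+\vec e_i)$ for all $\vec z\in\mathbb Z^k$. $f$ is a zero divisor if there is a nonzero polynomial $p$ with $p(\vec z)f(\vec z)=0$ for all $\vec z$. A $k$-dimensional box of size $n$ is $\{\vec z\in\mathbb Z^k: c_i\le z_i\le c_i+n,\ i=1,\dots,k\}$ for some $c_i\in\mathbb Z$. *)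

(* Defs.v *)
From HB Require Import structures.
From mathcomp Require Import all_boot all_order all_algebra.
From mathcomp Require Import mpoly.
Set Implicit Arguments. Unset Strict Implicit. Unset Printing Implicit Defensive.
Import Order.TTheory GRing.Theory Num.Theory.
Local Open Scope ring_scope.

Definition pt (k : nat) := 'I_k -> int.

Definition ptK (K : fieldType) (k : nat) (z : pt k) : 'I_k -> K :=
  fun j => (z j)%:~R.

Definition shift (k : nat) (z : pt k) (i : 'I_k) : pt k :=
  fun j => z j + (j == i)%:Z.

Definition hypergeometric (K : fieldType) (k : nat) (f : pt k -> K) : Prop :=
  forall i : 'I_k, exists A B : {mpoly K[k]},
    A != 0 /\ B != 0 /\
    forall z : pt k, A.@[ptK K z] * f z = B.@[ptK K z] * f (shift z i).

Definition zero_divisor (K : fieldType) (k : nat) (f : pt k -> K) : Prop :=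
  exists p : {mpoly K[k]}, p != 0 /\ forall z : pt k, p.@[ptK K z] * f z = 0.

Definition in_box (k : nat) (c : pt k) (n : nat) (z : pt k) : Prop :=
  forall i : 'I_k, c i <= z i <= c i + n%:Z.

Definition nonzero_on_large_boxes (K : fieldType) (k : nat) (f : pt k -> K) : Prop :=
  forall n : nat, exists c : pt k, forall z : pt k, in_box c n z -> f z != 0.

(* Main.v *)
Require Import Defs.
From mathcomp Require Import all_boot all_order all_algebra.
From mathcomp Require Import mpoly.
Import GRing.Theory Num.Theory.
From mathcomp Require Import zify.
From Stdlib Require Import Classical ClassicalEpsilon FunctionalExtensionality.
Set Implicit Arguments. Unset Strict Implicit. Unset Printing Implicit Defensive.
Import GRing.Theory Num.Theory.
Local Open Scope ring_scope.
Section Tr.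
Variables (K : fieldType) (k : nat).

Definition tr (c : 'I_k -> K) : k.-tuple {mpoly K[k]} :=
  [tuple 'X_i + (c i)%:MP | i < k].

Lemma tr_eval (c : 'I_k -> K) (p : {mpoly K[k]}) v :
  (p \mPo tr c).@[v] = p.@[fun i => v i + c i].
Proof.
rewrite comp_mpoly_meval; apply: meval_eq => i.
by rewrite tnth_mktuple mevalD mevalXU mevalC.
Qed.

Lemma comp_assoc (p : {mpoly K[k]}) (t t' : k.-tuple {mpoly K[k]}) :
  (p \mPo t) \mPo t' = p \mPo [tuple (tnth t i) \mPo t' | i < k].
Proof.
rewrite [p \mPo t]comp_mpolyE [RHS]comp_mpolyE raddf_sum /=; apply: eq_bigr => m _.
rewrite comp_mpolyZ rmorph_prod /=; congr (_ *: _); apply: eq_bigr => i _.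
by rewrite rmorphXn /= tnth_mktuple.
Qed.

Lemma tr_tr (p : {mpoly K[k]}) c d :
  (p \mPo tr c) \mPo tr d = p \mPo tr (fun i => c i + d i).
Proof.
rewrite comp_assoc; apply: (congr1 (fun t => p \mPo t)); apply: eq_from_tnth => i.
rewrite !tnth_mktuple.
rewrite comp_mpolyD comp_mpolyC comp_mpolyXU -tnth_nth tnth_mktuple.
by rewrite -addrA (addrC (d i)%:MP) -(mpolyCD k).
Qed.

Lemma tr_neq0 (p : {mpoly K[k]}) c : p != 0 -> p \mPo tr c != 0.
Proof.
move=> pn0; apply: contraNneq pn0 => H.
have : (p \mPo tr c) \mPo tr (fun i => - c i) = p.
  rewrite tr_tr -[RHS]comp_mpoly_id; apply: (congr1 (fun t => p \mPo t)).
  apply: eq_from_tnth => i; rewrite !tnth_mktuple subrr.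
  by rewrite mpolyC0 addr0.
by rewrite H comp_mpoly0 => <-.
Qed.
End Tr.

Theorem lemmaB17 (K : fieldType) (k : nat) (f : pt k -> K) :
  hypergeometric f -> zero_divisor f \/ nonzero_on_large_boxes f.
Proof.
move=> hf.
case: (classic (zero_divisor f)) => [|nzd]; [by left | right].
have [AB hAB] : exists AB : 'I_k -> {mpoly K[k]} * {mpoly K[k]}, forall i,
    (AB i).1 != 0 /\ (AB i).2 != 0 /\ forall z : pt k,
    (AB i).1.@[ptK K z] * f z = (AB i).2.@[ptK K z] * f (shift z i).
  have hf' : forall i, exists AB : {mpoly K[k]} * {mpoly K[k]},
      AB.1 != 0 /\ AB.2 != 0 /\ forall z : pt k,
      AB.1.@[ptK K z] * f z = AB.2.@[ptK K z] * f (shift z i).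
    by move=> i; have [A [B H]] := hf i; exists (A, B).
  exists (fun i => proj1_sig (constructive_indefinite_description _ (hf' i))).
  by move=> i; exact: (proj2_sig (constructive_indefinite_description _ (hf' i))).
move=> n.
pose offs (w : {ffun 'I_k -> 'I_n.+1}) : 'I_k -> K := fun j => (w j : nat)%:R.
pose Q := \prod_(w : {ffun 'I_k -> 'I_n.+1}) \prod_(i < k) ((AB i).1 \mPo tr (offs w)).
have Qn0 : Q != 0.
  apply/prodf_neq0 => w _; apply/prodf_neq0 => i _; apply: tr_neq0.
  by case: (hAB i).
have [c hc] : exists c, Q.@[ptK K c] * f c != 0.
  apply: NNPP => H; apply: nzd; exists Q; split => // z; apply: NNPP => H2.
  by apply: H; exists z; apply/eqP.
move: hc; rewrite mulf_eq0 negb_or => /andP[hQc fc].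
have hA : forall i (w : {ffun 'I_k -> 'I_n.+1}),
    (AB i).1.@[fun j => ptK K c j + offs w j] != 0.
  move=> i w; move: hQc; rewrite /Q rmorph_prod => /prodf_neq0 /(_ w isT).
  rewrite /= rmorph_prod => /prodf_neq0 /(_ i isT) H.
  by rewrite -(tr_eval (offs w) (AB i).1 (ptK K c)).
exists c.
suff: forall m z, in_box c n z -> (\sum_j `|z j - c j|)%N = m -> f z != 0.
  by move=> H z hz; exact: H _ z hz erefl.
elim => [|m IH] z hz hm.
  have -> : z = c; last by [].
  apply: functional_extensionality => j.
  move/eqP: hm; rewrite sum_nat_eq0 => /forallP /(_ j) /implyP /(_ isT) /eqP.
  by move=> H; lia.
have [j hj] : exists j, (0 < `|z j - c j|)%N.
  case: (pickP (fun j => 0 < `|z j - c j|)%N) => [j hj|H]; first by exists j.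
  move: hm; rewrite big1 // => l _; move: (H l) => /= /negbT; lia.
pose z' : pt k := fun l => z l - (l == j)%:Z.
have ez : shift z' j = z.
  by apply: functional_extensionality => l; rewrite /shift /z' subrK.
have hz' : in_box c n z'.
  move=> l; move: (hz l) (hz j); rewrite /z'.
  case: (eqVneq l j) => [->|_] /=; lia.
have hm' : (\sum_j `|z' j - c j|)%N = m.
  rewrite (bigD1 j) //=; move: hm; rewrite (bigD1 j) //=.
  rewrite [X in (_ + X)%N = _ -> _](eq_bigr (fun l => `|z' l - c l|)%N); last first.
    by move=> l hl; rewrite /z' (negbTE hl) subr0.
  rewrite /z' eqxx; move: hj; set S := (\sum_(_ < _ | _) _)%N; rewrite /=.
  move: (hz j); lia.
have fz' := IH z' hz' hm'.
pose w : {ffun 'I_k -> 'I_n.+1} := [ffun l => inord `|z' l - c l|%N].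
have ew : (fun l => ptK K c l + offs w l) =1 ptK K z'.
  move=> l; rewrite /offs /w ffunE inordK; last by move: (hz' l); lia.
  have hd : z' l = c l + (`|z' l - c l|%N)%:Z by move: (hz' l); lia.
  by rewrite /ptK [in RHS]hd intrD.
have hAz' : (AB j).1.@[ptK K z'] != 0.
  by rewrite -(meval_eq _ ew); exact: hA.
case: (hAB j) => _ [_ rel].
move: (rel z'); rewrite ez => e.
apply: contraNneq (mulf_neq0 hAz' fz') => fz0.
by rewrite e fz0 mulr0.
Qed.
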